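(* Let $G=\operatorname{SL}(V)$ with $\dim V=n\ge2$. Every $G$-invariant alternating bilinear form on $V\otimes V^*$ is a scalar multiple of $b_V$.
   Context: $K$ is an algebraically closed field of characteristic 2. The form $b_V$ on $V\otimes V^*$ is defined by $b_V(v\otimes f,v'\otimes f')=f(v')f'(v)+f(v)f'(v')$ for $v,v'\in V$, $f,f'\in V^*$. *)

(* Defs.v *)
From HB Require Import structures.
From mathcomp Require Import all_boot all_order all_algebra.
Set Implicit Arguments. Unset Strict Implicit. Unset Printing Implicit Defensive.
Import GRing.Theory.
Local Open Scope ring_scope.

(* V = K^n (column vectors), V^* = row vectors.  V (x) V^* is identified with
   'M[K]_n via  v (x) f  |->  v *m f  (column times row).  Under this
   identification g in GL(V) acts by A |-> g A g^-1, and the form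
   b_V(v(x)f, v'(x)f') = f(v')f'(v) + f(v)f'(v') becomes, bilinearly extended,
   b_V(A,B) = tr(AB) + tr(A) tr(B). *)
Definition bV (K : fieldType) (n : nat) (A B : 'M[K]_n) : K :=
  \tr (A *m B) + \tr A * \tr B.

Definition bilinear_form (K : fieldType) (n : nat) (b : 'M[K]_n -> 'M[K]_n -> K) : Prop :=
  (forall (a : K) (A A' B : 'M[K]_n), b (a *: A + A') B = a * b A B + b A' B) /\
  (forall (a : K) (A B B' : 'M[K]_n), b A (a *: B + B') = a * b A B + b A B').

Definition alternating_form (K : fieldType) (n : nat) (b : 'M[K]_n -> 'M[K]_n -> K) : Prop :=
  forall A : 'M[K]_n, b A A = 0.

Definition SL_invariant (K : fieldType) (n : nat) (b : 'M[K]_n -> 'M[K]_n -> K) : Prop :=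
  forall g : 'M[K]_n, \det g = 1 ->
    forall A B : 'M[K]_n, b (g *m A *m invmx g) (g *m B *m invmx g) = b A B.

(* Main.v *)
Require Import Defs.
From HB Require Import structures.
From mathcomp Require Import all_boot all_order all_algebra ring.
Import GRing.Theory.
Local Open Scope ring_scope.

Lemma bil0l (K : fieldType) n (b : 'M[K]_n -> 'M[K]_n -> K) :
  bilinear_form b -> forall B, b 0 B = 0.
Proof. move=> [Hl _] B; have := Hl (-1) 0 0 B; rewrite scaler0 addr0 mulN1r addNr. by []. Qed.

Lemma bil0r (K : fieldType) n (b : 'M[K]_n -> 'M[K]_n -> K) :
  bilinear_form b -> forall A, b A 0 = 0.
Proof. move=> [_ Hr] A; have := Hr (-1) A 0 0; rewrite scaler0 addr0 mulN1r addNr. by []. Qed.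

Section Lin.
Variables (K : fieldType) (n : nat) (b : 'M[K]_n -> 'M[K]_n -> K).
Hypothesis hb : bilinear_form b.

Lemma bDl A A' B : b (A + A') B = b A B + b A' B.
Proof. by have := hb.1 1 A A' B; rewrite scale1r mul1r. Qed.
Lemma bZl a A B : b (a *: A) B = a * b A B.
Proof. by have := hb.1 a A 0 B; rewrite addr0 bil0l // addr0. Qed.
Lemma bNl A B : b (- A) B = - b A B.
Proof. by rewrite -scaleN1r bZl mulN1r. Qed.
Lemma bBl A A' B : b (A - A') B = b A B - b A' B.
Proof. by rewrite bDl bNl. Qed.
Lemma bDr A B B' : b A (B + B') = b A B + b A B'.
Proof. by have := hb.2 1 A B B'; rewrite scale1r mul1r. Qed.
Lemma bZr a A B : b A (a *: B) = a * b A B.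
Proof. by have := hb.2 a A B 0; rewrite addr0 bil0r // addr0. Qed.
Lemma bNr A B : b A (- B) = - b A B.
Proof. by rewrite -scaleN1r bZr mulN1r. Qed.
Lemma bBr A B B' : b A (B - B') = b A B - b A B'.
Proof. by rewrite bDr bNr. Qed.
Lemma bsuml (I : Type) (r : seq I) (P : pred I) (F : I -> 'M[K]_n) B :
  b (\sum_(i <- r | P i) F i) B = \sum_(i <- r | P i) b (F i) B.
Proof. by apply: (big_morph (fun A => b A B)); [move=> x y; apply: bDl | apply: bil0l]. Qed.
Lemma bsumr (I : Type) (r : seq I) (P : pred I) (F : I -> 'M[K]_n) A :
  b A (\sum_(i <- r | P i) F i) = \sum_(i <- r | P i) b A (F i).
Proof. by apply: (big_morph (fun B => b A B)); [move=> x y; apply: bDr | apply: bil0r]. Qed.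

Lemma bexpand A B : b A B = \sum_i \sum_j \sum_k \sum_l
   (A i j * B k l * b (delta_mx i j) (delta_mx k l)).
Proof.
rewrite {1}(matrix_sum_delta A) {1}(matrix_sum_delta B) bsuml.
apply: eq_bigr => i _; rewrite bsuml; apply: eq_bigr => j _.
rewrite bZl bsumr mulr_sumr; apply: eq_bigr => k _.
rewrite bsumr mulr_sumr; apply: eq_bigr => l _.
by rewrite bZr !mulrA.
Qed.
End Lin.

Lemma bV_bil (K : fieldType) n : bilinear_form (@bV K n).
Proof.
split=> a A A' B; rewrite /bV.
- by rewrite mulmxDl -scalemxAl !mxtraceD !mxtraceZ; ring.
- by rewrite mulmxDr -scalemxAr !mxtraceD !mxtraceZ; ring.
Qed.

Lemma conj_eq (K : fieldType) n (h A X : 'M[K]_n) :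
  h \in unitmx -> h *m A = X *m h -> h *m A *m invmx h = X.
Proof. by move=> hu ->; rewrite mulmxK. Qed.

Lemma sum_if0 (K : fieldType) m (c s : K) : (0 < m)%N ->
  \sum_(i < m) (if nat_of_ord i == 0%N then c else 0) * s ^+ i = c.
Proof.
case: m => [//|m] _; rewrite big_ord_recl /= expr0 mulr1 big1 ?addr0 // => i _.
by rewrite mul0r.
Qed.

Lemma diagE (K : fieldType) n (d : 'rV[K]_n) (i j : 'I_n) :
  diag_mx d *m delta_mx i j = d 0 i *: delta_mx i j.
Proof.
apply/matrixP => x y; rewrite mul_diag_mx !mxE.
by case: (x =P i) => [->|_]; rewrite ?mulr0 ?mulr1.
Qed.

Lemma Ediag (K : fieldType) n (d : 'rV[K]_n) (i j : 'I_n) :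
  delta_mx i j *m diag_mx d = d 0 j *: delta_mx i j.
Proof.
apply/matrixP => x y; rewrite mul_mx_diag !mxE.
case: (y =P j) => [->|_]; rewrite ?eqxx ?andbF ?andbT ?mul0r ?mul1r ?mulr0 ?mulr1 //; exact: mulrC.
Qed.

Lemma conj_diag (K : fieldType) n (d : 'rV[K]_n) (i j : 'I_n) :
  (forall m, d 0 m != 0) ->
  diag_mx d *m delta_mx i j *m invmx (diag_mx d) = (d 0 i / d 0 j) *: delta_mx i j.
Proof.
move=> dn; apply: conj_eq.
  by rewrite unitmxE det_diag unitfE; apply/prodf_neq0 => m _; apply: dn.
by rewrite -scalemxAl Ediag scalerA divfK // diagE.
Qed.

Lemma trE (K : fieldType) n (i j : 'I_n) : \tr (delta_mx i j : 'M[K]_n) = (i == j)%:R.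
Proof.
rewrite /mxtrace (bigD1 i) //= big1 ?addr0 => [|k /negPf ki]; rewrite !mxE ?ki //.
by rewrite eqxx /= eq_sym.
Qed.

Section Main.
Variables (K : closedFieldType) (n : nat) (b : 'M[K]_n -> 'M[K]_n -> K).
Hypothesis charK : 2%N \in [pchar K].
Hypothesis hn : (2 <= n)%N.
Hypothesis hb : bilinear_form b.
Hypothesis halt : alternating_form b.
Hypothesis hinv : SL_invariant b.

Lemma two0 : (2%:R : K) = 0.
Proof. exact: pcharf0 charK. Qed.

Lemma oppr2 (x : K) : - x = x.
Proof. by apply/eqP; rewrite eq_sym -subr_eq0 opprK -mulr2n -mulr_natr two0 mulr0. Qed.

Lemma anti A B : b A B = b B A.
Proof.
have := halt (A + B); rewrite bDl // !bDr // !halt add0r addr0 => /eqP.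
by rewrite addr_eq0 oppr2 => /eqP.
Qed.

Lemma GLinv h A B : h \in unitmx ->
  b (h *m A *m invmx h) (h *m B *m invmx h) = b A B.
Proof.
move=> hu; have ud : \det h != 0 by rewrite -unitfE -unitmxE.
have [s hs] := @solve_monicpoly K n (fun i => if i == 0%N then (\det h)^-1 else 0)
  (@leq_trans 2 1 n isT hn).
have : \sum_(i < n) (if nat_of_ord i == 0%N then (\det h)^-1 else 0) * s ^+ i = (\det h)^-1.
  apply: sum_if0; exact: (@leq_trans 2 1 n isT hn).
move=> e; rewrite e in hs => {e}.
have s0 : s != 0.
  apply/eqP => s0; move: hs; rewrite s0 expr0n.
  have -> : (n == 0%N) = false by case: n hn.
  move=> /esym /eqP; by rewrite invr_eq0 (negPf ud).
have dg : \det (s *: h) = 1 by rewrite detZ hs mulVf.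
have gu : s *: h \in unitmx by rewrite unitmxE dg unitr1.
rewrite -[RHS](hinv _ dg) (invmxZ gu).
have cj X : s *: h *m X *m (s^-1 *: invmx h) = h *m X *m invmx h.
  by rewrite -scalemxAl -scalemxAl -scalemxAr scalerA mulfV // scale1r.
by rewrite !cj.
Qed.

Local Notation E := (@delta_mx K n n).
Local Notation al i k := (b (E i i) (E k k)).

Lemma torus (d : 'rV[K]_n) i j k l : (forall m, d 0 m != 0) ->
  d 0 i * d 0 k != d 0 j * d 0 l -> b (E i j) (E k l) = 0.
Proof.
move=> dn neq.
have hu : diag_mx d \in unitmx.
  by rewrite unitmxE det_diag unitfE; apply/prodf_neq0 => m _; apply: dn.
have := @GLinv (diag_mx d) (E i j) (E k l) hu; rewrite !conj_diag // bZl // bZr // => e.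
set c := b (E i j) (E k l) in e *.
have dj := dn j; have dl := dn l.
have : c * (d 0 i * d 0 k - d 0 j * d 0 l) = 0.
  transitivity (d 0 i / d 0 j * (d 0 k / d 0 l * c) * (d 0 j * d 0 l) - c * (d 0 j * d 0 l)).
    by field; apply/andP.
  by rewrite e mulrC subrr.
by move/eqP; rewrite mulf_eq0 subr_eq0 (negPf neq) orbF => /eqP.
Qed.

Lemma exists_t : exists t : K, [/\ t != 0, t != 1 & t * t != 1].
Proof.
have [t ht] := @solve_monicpoly K 2 (fun _ => 1) isT.
rewrite !big_ord_recl big_ord0 /= !mul1r expr0 addr0 in ht.
have t0 : t != 0.
  by apply/eqP => t0; move: ht; rewrite t0 expr0n /= addr0 => /eqP; rewrite eq_sym oner_eq0.
exists t; split=> //.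
  apply/eqP => t1; move: ht; rewrite t1 expr1n /= -(natrD K 1 1) two0 => /eqP.
  by rewrite oner_eq0.
rewrite -expr2 ht; apply/eqP => e.
by move/eqP: t0; apply; apply: (addrI 1); rewrite addr0.
Qed.

Definition dvec (p : 'I_n) (t : K) : 'rV[K]_n := \row_m (if m == p then t else 1).

Lemma dv_eq p t : dvec p t 0 p = t.
Proof. by rewrite /dvec mxE eqxx. Qed.
Lemma dv_ne p t m : m != p -> dvec p t 0 m = 1.
Proof. by rewrite /dvec mxE => /negPf ->. Qed.

Lemma W i j k l : ~~ ((i == j) && (k == l)) -> ~~ ((j == k) && (i == l)) ->
  b (E i j) (E k l) = 0.
Proof.
move=> h1 h2; have [t [t0 t1 tt1]] := exists_t.
have dn p m : (dvec p t) 0 m != 0 by rewrite /dvec mxE; case: (m == p) => //; exact: oner_neq0.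
have [eij|nij] := eqVneq i j.
  subst j; rewrite eqxx /= in h1.
  apply: (torus (dvec k t)) => //; rewrite dv_eq (@dv_ne k t l); last by rewrite eq_sym.
  by rewrite -subr_eq0 -mulrBr mulf_eq0 negb_or dn subr_eq0 t1.
have [eil|nil] := eqVneq i l.
  subst l; rewrite eqxx andbT in h2.
  apply: (torus (dvec k t)) => //; rewrite dv_eq (@dv_ne k t j h2) mul1r.
  by rewrite -subr_eq0 -{2}(mulr1 (dvec k t 0 i)) -mulrBr mulf_eq0 negb_or dn subr_eq0 t1.
apply: (torus (dvec i t)) => //; rewrite dv_eq (@dv_ne i t j) 1?eq_sym // (@dv_ne i t l) 1?eq_sym // mulr1.
rewrite /dvec mxE; by case: (k == i); rewrite ?mulr1.
Qed.

Definition tv (p q : 'I_n) : 'M[K]_n := 1%:M + E p q.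

Lemma tv_unit p q : p != q -> tv p q \in unitmx.
Proof.
move=> pq; have [] := @mulmx1_unit _ _ (tv p q) (1%:M - E p q) => //.
rewrite /tv mulmxDl mul1mx mulmxBr mulmx1 mul_delta_mx_cond eq_sym (negPf pq) mulr0n subr0.
by rewrite subrK.
Qed.

Lemma tv1 p q : p != q ->
  tv p q *m E q p *m invmx (tv p q) = E q p + E p p - E q q - E p q.
Proof.
move=> pq; apply: conj_eq; first exact: tv_unit.
rewrite /tv !mulmxDl !mulmxDr mul1mx !mulmx1 !mulNmx !mul_delta_mx_cond.
rewrite !eqxx eq_sym (negPf pq) !mulr1n !mulr0n.
by apply/matrixP => x y; rewrite !mxE; ring.
Qed.

Lemma tv2 p q : p != q ->
  tv p q *m E q q *m invmx (tv p q) = E q q + E p q.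
Proof.
move=> pq; apply: conj_eq; first exact: tv_unit.
rewrite /tv !mulmxDl !mulmxDr mul1mx !mulmx1 !mul_delta_mx_cond.
by rewrite eqxx eq_sym (negPf pq) !mulr1n !mulr0n !addr0.
Qed.

Lemma tv3 p q r : p != q -> r != p -> r != q ->
  tv p q *m E r r *m invmx (tv p q) = E r r.
Proof.
move=> pq rp rq; apply: conj_eq; first exact: tv_unit.
rewrite /tv !mulmxDl !mulmxDr mul1mx !mulmx1 !mul_delta_mx_cond.
by rewrite (negPf rp) eq_sym (negPf rq) !mulr0n !addr0.
Qed.

Ltac neqs := repeat match goal with H : is_true (?a != ?c) |- _ =>
  rewrite ?(negPf H) ?(eq_sym c a) ?(negPf H); clear H end;
  rewrite ?eqxx /= ?andbF ?andbT ?andFb.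
Ltac wk := apply: W; neqs.

Lemma T1 p q r : p != q -> r != p -> r != q -> al p r = al q r.
Proof.
move=> pq rp rq; have := @GLinv (tv p q) (E q p) (E r r) (@tv_unit p q pq).
rewrite tv1 // tv3 // !bBl // !bDl //.
rewrite (_ : b (E q p) (E r r) = 0); last by wk.
rewrite (_ : b (E p q) (E r r) = 0); last by wk.
rewrite add0r subr0 => /eqP; rewrite subr_eq0 => /eqP //.
Qed.

Lemma T2 p q : p != q -> b (E q p) (E p q) = al p q.
Proof.
move=> pq; have := @GLinv (tv p q) (E q p) (E q q) (@tv_unit p q pq).
rewrite tv1 // tv2 // !bBl // !bDl // !bDr //.
rewrite (_ : b (E q p) (E q q) = 0); last by wk.
rewrite (_ : b (E p p) (E p q) = 0); last by wk.
rewrite (_ : b (E q q) (E p q) = 0); last by wk.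
rewrite (_ : b (E p q) (E q q) = 0); last by wk.
rewrite (_ : b (E p q) (E p q) = 0); last by wk.
rewrite halt !add0r !addr0 subr0 oppr0 addr0 => e; apply/eqP; by rewrite -subr_eq0 oppr2 e.
Qed.

Definition o0 : 'I_n := Ordinal (@leq_trans 2 1 n isT hn).
Definition o1 : 'I_n := Ordinal hn.

Lemma L x y r : x != r -> y != r -> al x r = al y r.
Proof.
move=> xr yr; have [->//|xy] := eqVneq x y.
by apply: T1 => //; rewrite eq_sym.
Qed.

Lemma alc i k : i != k -> al i k = al o0 o1.
Proof.
move=> ik; have [ek|k1] := eqVneq k o1.
  rewrite ek in ik *; apply: L => //.
rewrite (@L i o1 k) //; last by rewrite eq_sym.

by rewrite anti; apply: L.
Qed.

Lemma key i j k l : b (E i j) (E k l) = al o0 o1 * bV (E i j) (E k l).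
Proof.
rewrite /bV mul_delta_mx_cond.
case: (boolP ((i == j) && (k == l))) => [/andP [/eqP eij /eqP ekl] | h1].
  subst j l; have [eik|nik] := eqVneq i k.
    by subst k; rewrite halt mulr1n !trE eqxx mulr1 -natrD two0 mulr0.
  by rewrite alc // mulr0n mxtrace0 !trE !eqxx mul1r add0r mulr1.
case: (boolP ((j == k) && (i == l))) => [/andP [/eqP ejk /eqP eil] | h2].
  subst k l; have nij : j != i by apply: contra h1 => /eqP ->; rewrite eqxx.
  rewrite (@T2 j i nij) alc // !trE !eqxx mulr1n (eq_sym i j) (negPf nij).
  by rewrite trE eqxx mul0r addr0 mulr1.
rewrite W //; move: h2; case: (j == k) => /= h2; rewrite ?mulr1n ?mulr0n ?mxtrace0 !trE.
  move: h1 h2; case: (i == l); case: (i == j); case: (k == l) => //= _ _;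
  by rewrite ?mulr0n ?mulr1n ?mul0r ?mulr0 ?add0r ?addr0 ?mulr0.
move: h1; case: (i == j); case: (k == l) => //= _;
by rewrite ?mulr0n ?mulr1n ?mul0r ?mulr0 ?add0r ?addr0 ?mulr0.
Qed.

End Main.

Theorem lemma8p2 (K : closedFieldType) (n : nat)
  (charK : 2%N \in [pchar K]) (hn : (2 <= n)%N)
  (b : 'M[K]_n -> 'M[K]_n -> K) :
  bilinear_form b -> alternating_form b -> SL_invariant b ->
  exists c : K, forall A B : 'M[K]_n, b A B = c * bV A B.
Proof.
move=> hb halt hinv.
exists (b (delta_mx (@o0 n hn) (@o0 n hn)) (delta_mx (@o1 n hn) (@o1 n hn))) => A B.
rewrite (@bexpand K n b hb A B) (@bexpand K n (@bV K n) (@bV_bil K n) A B) mulr_sumr.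
apply: eq_bigr => i _; rewrite mulr_sumr; apply: eq_bigr => j _.
rewrite mulr_sumr; apply: eq_bigr => k _; rewrite mulr_sumr; apply: eq_bigr => l _.
by rewrite (@key K n b charK hn hb halt hinv i j k l) mulrCA.
Qed.
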